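(* Let $A\in\mathbb{R}^{n\times n}$ be a positive weighted circuit matrix with $k\ge 2$ weights $c_1,\dots,c_k>0$. Let $A'$ be obtained from $A$ by setting one or more, but not all, of the weights $c_j$ to $0$. Then $r(t):=r\big((1-t)A'+tA'^{\top}\big)$ is strictly concave in $t$ on $(0,1)$.
   Context: A weighted circuit matrix is an $n\times n$ matrix for which there exist $k\in\{1,\dots,n\}$ distinct indices $i_1,\dots,i_k\in\{1,\dots,n\}$ such that all entries are zero except weights $c_1,\dots,c_k$ at positions $(i_1,i_2),(i_2,i_3),\dots,(i_{k-1},i_k),(i_k,i_1)$. It is a positive weighted circuit matrix if all weights are positive. $r(M)$ denotes the spectral radius of $M$. *)

(* Defs.v *)
From HB Require Import structures.
From mathcomp Require Import all_boot all_order all_algebra.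
From mathcomp Require Import classical_sets reals.
From mathcomp.real_closed Require Import complex.
Set Implicit Arguments. Unset Strict Implicit. Unset Printing Implicit Defensive.
Import Order.TTheory GRing.Theory Num.Theory.
Local Open Scope ring_scope.
Local Open Scope classical_set_scope.

Definition eigenvalueC (R : realType) (n : nat) (M : 'M[R]_n) (z : R[i]) : bool :=
  root (char_poly (map_mx (real_complex R) M)) z.

Definition spectral_radius (R : realType) (n : nat) (M : 'M[R]_n) : R :=
  sup [set Normc.normc z | z in [set z | eigenvalueC M z]].

(* weighted circuit matrix on distinct indices idx 0, ..., idx (k-1) with
   weights c : entries c j at position (idx j, idx (j+1 mod k)) *)
Definition circuit_mx (R : realType) (n k : nat) (idx : 'I_k -> 'I_n)
  (c : 'I_k -> R) : 'M[R]_n :=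
  \sum_(j < k) c j *: delta_mx (idx j) (idx (ordS j)).

Definition strictly_concave_on_01 (R : realType) (f : R -> R) : Prop :=
  forall x y s : R, 0 < x < 1 -> 0 < y < 1 -> x != y -> 0 < s < 1 ->
    (1 - s) * f x + s * f y < f ((1 - s) * x + s * y).

(* Main.v *)
Require Import Defs.
From HB Require Import structures.
From mathcomp Require Import all_boot all_order all_algebra.
From mathcomp Require Import classical_sets reals.
From mathcomp.real_closed Require Import complex.
From mathcomp Require Import ring lra zify.
Import Order.TTheory GRing.Theory Num.Theory.
Local Open Scope ring_scope.
Lemma eig_sim (F : fieldType) n (A P Q : 'M[F]_n) a w :
  a != 0 -> P *m Q = 1%:M -> Q *m P = 1%:M ->
  eigenvalue (a *: (Q *m A *m P)) w = eigenvalue A (w / a).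
Proof.
move=> a0 PQ QP; apply/eigenvalueP/eigenvalueP => [[v Hv nz]|[v Hv nz]].
- exists (v *m Q).
    have E : v *m (a *: (Q *m A *m P)) *m Q = a *: (v *m Q *m A).
      by rewrite -scalemxAr -scalemxAl !mulmxA -(mulmxA _ P Q) PQ mulmx1.
    rewrite Hv -scalemxAl in E.
    by rewrite mulrC -scalerA E scalerA mulVf // scale1r.
  apply: contra nz => /eqP H; apply/eqP.
  by rewrite -[v]mulmx1 -QP mulmxA H mul0mx.
- exists (v *m P).
    rewrite -scalemxAr !mulmxA -(mulmxA v P Q) PQ mulmx1 Hv -scalemxAl scalerA.
    by rewrite mulrC mulfVK.
  apply: contra nz => /eqP H; apply/eqP.
  by rewrite -[v]mulmx1 -PQ mulmxA H mul0mx.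
Qed.

Lemma normc_real (R : rcfType) (x : R) : Normc.normc (real_complex R x) = `|x|.
Proof. by rewrite /Normc.normc /= expr0n /= addr0 sqrtr_sqr. Qed.

Lemma normc_ge0 (R : rcfType) (z : R[i]) : 0 <= Normc.normc z.
Proof. by case: z => a b; rewrite /Normc.normc sqrtr_ge0. Qed.

Lemma eig_bound (R : realType) n (M : 'M[R]_n) :
  exists b, forall z, eigenvalueC M z -> Normc.normc z <= b.
Proof.
have [r Hr] := closed_field_poly_normal (char_poly (map_mx (real_complex R) M)).
exists (\sum_(z <- r) Normc.normc z) => z; rewrite /eigenvalueC Hr.
rewrite (monicP (char_poly_monic _)) scale1r root_prod_XsubC => zr.
rewrite (big_rem z zr) /= lerDl sumr_ge0 // => i _; exact: normc_ge0.
Qed.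

Lemma trmx_exp_sym (R : comNzRingType) n (B : 'M[R]_n) m :
  B^T = B -> (B ^+ m)^T = B ^+ m.
Proof.
move=> BT; elim: m => [|m IH]; first by rewrite expr0 trmx1.
rewrite {1}exprS exprSr. by rewrite -!mulmxE trmx_mul IH BT.
Qed.

Lemma sym_sq0 (R : realDomainType) n (C : 'M[R]_n) :
  C^T = C -> C *m C = 0 -> C = 0.
Proof.
move=> CT CC; apply/matrixP => i j; rewrite mxE.
have := congr1 (fun X : 'M[R]_n => X i i) CC; rewrite !mxE => H.
have H' : \sum_(l < n) C i l * C i l = 0.
  have CE : forall a b, C a b = C b a by move=> a b; rewrite -{1}CT mxE.
  by rewrite -[RHS]H; apply: eq_bigr => l _; rewrite (CE l i).
have := @psumr_eq0P _ _ predT (fun l => C i l * C i l).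
move=> /(_ (fun l _ => sqr_ge0 _)) /(_ H') /(_ j isT) /eqP.
by rewrite mulf_eq0 orbb => /eqP.
Qed.

Lemma sym_nil (R : realDomainType) n (B : 'M[R]_n) m :
  B^T = B -> B ^+ m = 0 -> B = 0.
Proof.
move=> BT Bm.
have key : forall j, B ^+ (2 ^ j) = 0 -> B = 0.
  elim=> [|j IH]; first by rewrite expn0 expr1.
  move=> H; apply: IH; apply: sym_sq0; first exact: trmx_exp_sym.
  by rewrite mulmxE -exprD addnn -mul2n -expnS.
apply: (key m).
have le : (m <= 2 ^ m)%N by apply: ltnW; rewrite ltn_expl.
by rewrite -(subnKC le) exprD Bm mul0r.
Qed.

Lemma map_mxX (R : realType) n (B : 'M[R]_n.+1) m :
  map_mx (real_complex R) (B ^+ m) = (map_mx (real_complex R) B) ^+ m.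
Proof.
elim: m => [|m IH]; first by rewrite !expr0 map_mx1.
by rewrite !exprS -!mulmxE map_mxM IH.
Qed.

Lemma nonzero_eig (R : realType) n (B : 'M[R]_n.+1) :
  B^T = B -> B != 0 -> exists z, eigenvalueC B z /\ 0 < Normc.normc z.
Proof.
move=> BT Bn0.
set BC := map_mx (real_complex R) B.
have [r Hr] := closed_field_poly_normal (char_poly BC).
rewrite (monicP (char_poly_monic _)) scale1r in Hr.
have [/hasP [z zr nz]|] := boolP (has (fun z => z != 0) r).
  exists z; split; first by rewrite /eigenvalueC -/BC Hr root_prod_XsubC.
  rewrite lt_def normc_ge0 andbT; apply: contra nz => /eqP H.
  by apply/eqP; apply: Normc.eq0_normc.
rewrite -all_predC => /allP all0.
have CH := Cayley_Hamilton BC.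
have HP : forall s, {subset s <= r} ->
    horner_mx BC (\prod_(z <- s) ('X - z%:P)) = BC ^+ size s.
  elim=> [|a s IH] sub; first by rewrite big_nil rmorph1 expr0.
  rewrite big_cons rmorphM /= IH; last by move=> x xs; apply: sub; rewrite inE xs orbT.
  have a0 : a = 0.
    by apply/eqP; have := all0 a (sub a (mem_head _ _)); rewrite /= negbK.
  by rewrite a0 subr0 horner_mx_X exprS.
rewrite Hr HP // in CH.
have : map_mx (real_complex R) (B ^+ size r) == 0 by rewrite map_mxX CH.
rewrite map_mx_eq0 => /eqP Bm.
by move: Bn0; rewrite (@sym_nil _ _ B _ BT Bm) eqxx.
Qed.

Local Open Scope classical_set_scope.

Lemma sup_scale (R : realType) (E F : set R) (mu : R) : 0 < mu ->
  F = [set mu * x | x in E] -> E !=set0 -> has_ubound E -> sup F = mu * sup E.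
Proof.
move=> mu0 FE [x0 Ex0] hub.
have ubE := ub_le_sup hub.
have Fne : F !=set0 by exists (mu * x0); rewrite FE; exists x0.
have ubF : ubound F (mu * sup E).
  by move=> y; rewrite FE => -[x Ex <-]; rewrite ler_pM2l //; apply: ubE.
apply/le_anti/andP; split; first exact: ge_sup.
rewrite -ler_pdivlMl //; apply: ge_sup; first by exists x0.
move=> x Ex; rewrite ler_pdivlMl //; apply: (ub_le_sup (ex_intro _ _ ubF)).
by rewrite FE; exists x.
Qed.

Lemma conc_sqrt (R : realType) (x y s : R) :
  0 < x < 1 -> 0 < y < 1 -> x != y -> 0 < s < 1 ->
  (1 - s) * Num.sqrt (x * (1 - x)) + s * Num.sqrt (y * (1 - y)) <
  Num.sqrt (((1 - s) * x + s * y) * (1 - ((1 - s) * x + s * y))).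
Proof.
move=> /andP[x0 x1] /andP[y0 y1] xy /andP[s0 s1].
set z := (1 - s) * x + s * y.
have hx : 0 <= x * (1 - x) by apply: mulr_ge0; lra.
have hy : 0 <= y * (1 - y) by apply: mulr_ge0; lra.
have hz : 0 <= z * (1 - z) by apply: mulr_ge0; rewrite /z; nra.
have ux := sqr_sqrtr hx; have uy := sqr_sqrtr hy; have uz := sqr_sqrtr hz.
have gx := sqrtr_ge0 (x * (1 - x)); have gy := sqrtr_ge0 (y * (1 - y)).
have gz := sqrtr_ge0 (z * (1 - z)).
move: ux uy uz gx gy gz.
set u := Num.sqrt _; set v := Num.sqrt _; set w := Num.sqrt _.
move=> ux uy uz gx gy gz.
have dxy : 0 < (x - y) ^+ 2 by rewrite lt_def sqr_ge0 andbT sqrf_eq0 subr_eq0.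
have lhs2 : ((1 - s) * u + s * v) ^+ 2 < w ^+ 2.
  rewrite uz /z.
  have h1 : 0 <= s * (1 - s) * (u - v) ^+ 2.
    by apply: mulr_ge0; [apply: mulr_ge0; lra| exact: sqr_ge0].
  have h2 : 0 < s * (1 - s) * (x - y) ^+ 2.
    by apply: mulr_gt0 => //; apply: mulr_gt0; lra.
  have e1 : ((1 - s) * u + s * v) ^+ 2 = (1 - s) * u ^+ 2 + s * v ^+ 2 - s * (1 - s) * (u - v) ^+ 2 by ring.
  have e2 : ((1 - s) * x + s * y) * (1 - ((1 - s) * x + s * y)) = (1 - s) * (x * (1 - x)) + s * (y * (1 - y)) + s * (1 - s) * (x - y) ^+ 2 by ring.
  rewrite e1 e2 ux uy; lra.
have : 0 <= (1 - s) * u + s * v by nra.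
move=> h0; rewrite -(ltr_pXn2r (n:=2)) //; rewrite nnegrE //.
Qed.

Lemma diag_inv (R : fieldType) n (e f : 'I_n -> R) :
  (forall p, e p * f p = 1) ->
  diag_mx (\row_p e p) *m diag_mx (\row_p f p) = 1%:M.
Proof.
move=> ef; rewrite mul_diag_mx; apply/matrixP => i j; rewrite !mxE.
by case: eqVneq => [->|_]; rewrite ?mulr1n ?ef ?mulr0n ?mulr0.
Qed.

Lemma ordS_val k (l : 'I_k) : nat_of_ord (ordS l) = if (l.+1 < k)%N then l.+1 else 0%N.
Proof.
rewrite /ordS /=; case: ifP => h; first by rewrite modn_small.
have -> : l.+1 = k by apply/eqP; rewrite eqn_leq ltn_ord leqNgt h.
by rewrite modnn.
Qed.

Lemma circuit_sim (R : realType) n k (idx : 'I_k -> 'I_n) (c' : 'I_k -> R)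
  (d : 'I_n -> R) (t mu : R) :
  (forall l, c' l != 0 ->
     mu * ((d (idx l))^-1 * d (idx (ordS l))) = 1 - t /\
     mu * ((d (idx (ordS l)))^-1 * d (idx l)) = t) ->
  (1 - t) *: circuit_mx idx c' + t *: (circuit_mx idx c')^T =
  mu *: (diag_mx (\row_p (d p)^-1) *m (circuit_mx idx c' + (circuit_mx idx c')^T)
         *m diag_mx (\row_p d p)).
Proof.
move=> H.
have Ae : forall p q, circuit_mx idx c' p q =
    \sum_l c' l * ((p == idx l) && (q == idx (ordS l)))%:R.
  by move=> p q; rewrite /circuit_mx summxE; apply: eq_bigr => l _; rewrite !mxE.
apply/matrixP => p q; rewrite mul_mx_diag mul_diag_mx !mxE !Ae.
rewrite [in RHS]mulrDr [in RHS]mulrDl [in RHS]mulrDr; congr (_ + _);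
  rewrite !(mulr_sumr, mulr_suml); apply: eq_bigr => l _.
- case: (eqVneq (c' l) 0) => [->|nz]; first by rewrite !(mul0r, mulr0).
  have [h1 h2] := H l nz.
  case: andP => [[/eqP -> /eqP ->]|_]; last by rewrite !(mulr0, mul0r).
  by rewrite -h1; ring.
- case: (eqVneq (c' l) 0) => [->|nz]; first by rewrite !(mul0r, mulr0).
  have [h1 h2] := H l nz.
  case: andP => [[/eqP -> /eqP ->]|_]; last by rewrite !(mulr0, mul0r).
  by rewrite -h2; ring.
Qed.

Lemma m_step (k s l : nat) : (s < k)%N -> (l < k)%N -> l != s ->
  (if (s < (if (l.+1 < k)%N then l.+1 else 0%N))%N then ((if (l.+1 < k)%N then l.+1 else 0%N) - s.+1)%N
   else ((if (l.+1 < k)%N then l.+1 else 0%N) + k - s.+1)%N) =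
  (if (s < l)%N then (l - s.+1)%N else (l + k - s.+1)%N).+1.
Proof.
move=> sk lk ls.
have ls' : l <> s by apply/eqP.
case: (ltnP l.+1 k) => h1; rewrite ?ltn0 /=; case: (ltnP s l) => h2.
all: try (case: ifP => h3).
all: lia.
Qed.

Theorem corollary2 (R : realType) (n k : nat) (idx : 'I_k -> 'I_n)
  (c : 'I_k -> R) (S : {set 'I_k}) :
  (2 <= k)%N -> injective idx -> (forall j, 0 < c j) ->
  (0 < #|S| < k)%N ->
  let A' := circuit_mx idx (fun j => if j \in S then 0 else c j) in
  strictly_concave_on_01
    (fun t : R => spectral_radius ((1 - t) *: A' + t *: A'^T)).
Proof.
move=> k2 inj cpos /andP[S0 Sk].
have k0 : (0 < k)%N by apply: leq_trans k2.
case: n idx inj => [|n] idx inj; first by case: (idx (Ordinal k0)).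
set c' := fun j => if j \in S then 0 else c j.
move=> A'.
set B := A' + A'^T.
have c'ge0 : forall j, 0 <= c' j by move=> j; rewrite /c'; case: ifP => // _; exact: ltW.
have Ae : forall p q, A' p q =
    \sum_l c' l * ((p == idx l) && (q == idx (ordS l)))%:R.
  by move=> p q; rewrite /A' /circuit_mx summxE; apply: eq_bigr => l _; rewrite !mxE.
have Age0 : forall p q, 0 <= A' p q.
  by move=> p q; rewrite Ae; apply: sumr_ge0 => l _; apply: mulr_ge0.
have Aidx : forall l, A' (idx l) (idx (ordS l)) = c' l.
  move=> l; rewrite Ae (bigD1 l) //= !eqxx mulr1 big1 ?addr0 // => j jl.
  by rewrite (inj_eq inj) eq_sym (negbTE jl) mulr0.
have BT : B^T = B by rewrite /B linearD /= trmxK addrC.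
have [j0 j0S] : exists j0, j0 \notin S.
  case: (pickP (fun j => j \notin S)) => [j0 H|H]; first by exists j0.
  have ST : (S = [set: 'I_k])%SET.
    by apply/setP => j; rewrite !inE; move: (H j) => /= /negbFE ->.
  by move: Sk; rewrite ST cardsT card_ord ltnn.
have Bn0 : B != 0.
  apply/negP => /eqP B0.
  have := congr1 (fun X : 'M[R]_n.+1 => X (idx j0) (idx (ordS j0))) B0.
  rewrite /B !mxE Aidx /c' (negbTE j0S) => /eqP; rewrite paddr_eq0 ?Age0 ?(ltW (cpos _)) //.
  by rewrite (gt_eqF (cpos _)).
have [z0 [z0e z0p]] := @nonzero_eig _ _ B BT Bn0.
set rho := spectral_radius B.
have [b Hb] := @eig_bound _ _ B.
have EBub : has_ubound [set Normc.normc z | z in [set z | eigenvalueC B z]].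
  by exists b => _ [z ez <-]; apply: Hb.
have rho_pos : 0 < rho.
  apply: (lt_le_trans z0p); apply: (ub_le_sup EBub); by exists z0.
have claim : forall t, 0 < t < 1 ->
    spectral_radius ((1 - t) *: A' + t *: A'^T) = Num.sqrt (t * (1 - t)) * rho.
  move=> t /andP[t0 t1].
  have t1' : 0 < 1 - t by rewrite subr_gt0.
  set mu := Num.sqrt (t * (1 - t)).
  have mu0 : 0 < mu by rewrite sqrtr_gt0 mulr_gt0.
  set lam := (1 - t) / mu.
  have lam0 : 0 < lam by rewrite divr_gt0.
  have [s0 s0S] : exists s0, s0 \in S by apply/set0Pn; rewrite -card_gt0.
  pose m (l : 'I_k) : nat := if (s0 < l)%N then (l - s0.+1)%N else (l + k - s0.+1)%N.
  have mS : forall l, l != s0 -> m (ordS l) = (m l).+1.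
    move=> l; rewrite -(inj_eq val_inj) /= => ls.
    by rewrite /m ordS_val; apply: m_step.
  pose d (p : 'I_n.+1) : R :=
    if [pick l | idx l == p] is Some l then lam ^+ m l else 1.
  have dE : forall l, d (idx l) = lam ^+ m l.
    move=> l; rewrite /d; case: pickP => [l' /eqP /inj -> //|H].
    by have := H l; rewrite eqxx.
  have dpos : forall p, 0 < d p.
    by move=> p; rewrite /d; case: pickP => // *; exact: exprn_gt0.
  have key : (1 - t) *: A' + t *: A'^T =
      mu *: (diag_mx (\row_p (d p)^-1) *m B *m diag_mx (\row_p d p)).
    apply: circuit_sim => l nz.
    have ls : l != s0 by apply: contra nz => /eqP ->; rewrite /c' s0S.
    have pm : lam ^+ m l != 0 by rewrite expf_neq0 // gt_eqF.
    rewrite !dE mS // exprS; split.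
      by rewrite (mulrC lam) mulKf // /lam mulrC divfK // gt_eqF.
    rewrite invfM -mulrA mulVf // mulr1 /lam invf_div mulrA -expr2 sqr_sqrtr.
      by rewrite mulfK // gt_eqF.
    by rewrite mulr_ge0 // ltW.
  have eigC : forall z, eigenvalueC ((1 - t) *: A' + t *: A'^T) z =
      eigenvalueC B (z / real_complex R mu).
    move=> z; rewrite /eigenvalueC -!eigenvalue_root_char key map_mxZ !map_mxM.
    apply: eig_sim; first by rewrite fmorph_eq0 gt_eqF.
      by rewrite -map_mxM diag_inv ?map_mx1 // => p; rewrite mulfV // gt_eqF.
    by rewrite -map_mxM diag_inv ?map_mx1 // => p; rewrite mulVf // gt_eqF.
  have muC0 : real_complex R mu != 0 by rewrite fmorph_eq0 gt_eqF.
  apply: sup_scale => //; last by exists (Normc.normc z0); exists z0.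
  apply/seteqP; split => w /=.
    case=> z ez <-; exists (Normc.normc (z / real_complex R mu)).
      by exists (z / real_complex R mu) => //; move: ez; rewrite /= eigC.
    rewrite Normc.normcM Normc.normcV normc_real ger0_norm ?ltW //.
    by rewrite mulrCA mulfV ?gt_eqF // mulr1.
  case=> x [w' ew' <-] <-; exists (real_complex R mu * w').
    by rewrite /= eigC mulrC mulKf.
  by rewrite Normc.normcM normc_real ger0_norm // ltW.
move=> x y s hx hy xy hs.
have hz : 0 < (1 - s) * x + s * y < 1.
  move: hx hy hs => /andP[? ?] /andP[? ?] /andP[? ?]; apply/andP; split; nra.
rewrite /= !claim //.
rewrite mulrA (mulrA s) -mulrDl ltr_pM2r //.
exact: conc_sqrt.
Qed.
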